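(* Let $f(t)=\sum_{k=0}^n a_kt^k$ with $a_k\in\mathbb{H}$ be a left quaternion polynomial, and let $r,s\in\mathbb{R}$ with $s\ne0$. Then there exist real numbers $\alpha_1,\dots,\alpha_4,\beta_1,\dots,\beta_4$ such that $$J(f)(r+\mathbf{i}s)=\begin{bmatrix}\alpha_1&-\beta_1&-\alpha_2&\beta_2\\ \beta_1&\alpha_1&\beta_2&\alpha_2\\ \alpha_3&-\beta_3&\alpha_4&-\beta_4\\ -\beta_3&-\alpha_3&\beta_4&\alpha_4\end{bmatrix}.$$
   Context: $\mathbb{H}$ is the real quaternion algebra, identified with $\mathbb{R}^4$ via $x+\mathbf{i}y+\mathbf{j}z+\mathbf{k}w\mapsto(x,y,z,w)$. A left polynomial $f(t)=\sum a_kt^k$ is evaluated at $c\in\mathbb{H}$ as $\sum a_kc^k$ and is viewed as a map $\mathbb{R}^4\to\mathbb{R}^4$ via $f=f_1+\mathbf{i}f_2+\mathbf{j}f_3+\mathbf{k}f_4\mapsto(f_1,f_2,f_3,f_4)$; $J(f)(c)=[\partial f_i/\partial x_j](c)$ with $(x_1,\dots,x_4)=(x,y,z,w)$. *)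

(* Defs.v *)
From Stdlib Require Import Reals List.
Open Scope R_scope.

(* Quaternion x + i y + j z + k w, identified with (x,y,z,w) in R^4. *)
Record quat : Type := Quat { qx : R; qy : R; qz : R; qw : R }.

Definition qzero : quat := Quat 0 0 0 0.
Definition qone : quat := Quat 1 0 0 0.

Definition qadd (p q : quat) : quat :=
  Quat (qx p + qx q) (qy p + qy q) (qz p + qz q) (qw p + qw q).

(* Hamilton product, with i^2 = j^2 = k^2 = ijk = -1. *)
Definition qmul (p q : quat) : quat :=
  Quat (qx p * qx q - qy p * qy q - qz p * qz q - qw p * qw q)
       (qx p * qy q + qy p * qx q + qz p * qw q - qw p * qz q)
       (qx p * qz q - qy p * qw q + qz p * qx q + qw p * qy q)
       (qx p * qw q + qy p * qz q - qz p * qy q + qw p * qx q).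

Fixpoint qpow (c : quat) (n : nat) : quat :=
  match n with O => qone | S m => qmul c (qpow c m) end.

Definition qscale (t : R) (q : quat) : quat :=
  Quat (t * qx q) (t * qy q) (t * qz q) (t * qw q).

(* A left polynomial f(t) = sum_k a_k t^k is given by its coefficient list
   [a_0; a_1; ...; a_n]; it is evaluated at c as sum_k a_k c^k. *)
Definition lpoly := list quat.

Fixpoint qeval_from (f : lpoly) (k : nat) (c : quat) : quat :=
  match f with
  | nil => qzero
  | a :: f' => qadd (qmul a (qpow c k)) (qeval_from f' (S k) c)
  end.

Definition qeval (f : lpoly) (c : quat) : quat := qeval_from f O c.

(* Coordinates (1-indexed as in the paper): component i of q, i = 1..4. *)
Definition qcomp (i : nat) (q : quat) : R :=
  match i with
  | 1%nat => qx q | 2%nat => qy q | 3%nat => qz q | _ => qw q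
  end.

Definition qbasis (j : nat) : quat :=
  match j with
  | 1%nat => Quat 1 0 0 0 | 2%nat => Quat 0 1 0 0
  | 3%nat => Quat 0 0 1 0 | _ => Quat 0 0 0 1
  end.

Definition jacobian_entry_is (f : lpoly) (c : quat) (i j : nat) (l : R) : Prop :=
  derivable_pt_lim (fun t => qcomp i (qeval f (qadd c (qscale t (qbasis j))))) 0 l.

Definition pattern_matrix (a1 a2 a3 a4 b1 b2 b3 b4 : R) (i j : nat) : R :=
  match i, j with
  | 1%nat, 1%nat => a1 | 1%nat, 2%nat => - b1 | 1%nat, 3%nat => - a2 | 1%nat, 4%nat => b2
  | 2%nat, 1%nat => b1 | 2%nat, 2%nat => a1 | 2%nat, 3%nat => b2 | 2%nat, 4%nat => a2
  | 3%nat, 1%nat => a3 | 3%nat, 2%nat => - b3 | 3%nat, 3%nat => a4 | 3%nat, 4%nat => - b4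
  | 4%nat, 1%nat => - b3 | 4%nat, 2%nat => - a3 | 4%nat, 3%nat => b4 | 4%nat, 4%nat => a4
  | _, _ => 0
  end.

(* Main.v *)
Require Import Defs.
From Stdlib Require Import Reals List Lra Lia.
Open Scope R_scope.

Lemma dl_eq f x l l' : derivable_pt_lim f x l -> l = l' -> derivable_pt_lim f x l'.
Proof. intros H ->; exact H. Qed.

Lemma dl_plus f g a b : derivable_pt_lim f 0 a -> derivable_pt_lim g 0 b ->
  derivable_pt_lim (fun t => f t + g t) 0 (a + b).
Proof. intros; exact (derivable_pt_lim_plus f g 0 a b H H0). Qed.
Lemma dl_minus f g a b : derivable_pt_lim f 0 a -> derivable_pt_lim g 0 b ->
  derivable_pt_lim (fun t => f t - g t) 0 (a - b).
Proof. intros; exact (derivable_pt_lim_minus f g 0 a b H H0). Qed.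
Lemma dl_mult f g a b : derivable_pt_lim f 0 a -> derivable_pt_lim g 0 b ->
  derivable_pt_lim (fun t => f t * g t) 0 (a * g 0 + f 0 * b).
Proof. intros; exact (derivable_pt_lim_mult f g 0 a b H H0). Qed.
Lemma dl_const (k : R) : derivable_pt_lim (fun _ => k) 0 0.
Proof. exact (derivable_pt_lim_const k 0). Qed.
Lemma dl_lin (a b : R) : derivable_pt_lim (fun t => a + t * b) 0 b.
Proof.
  apply dl_eq with (0 + (1 * b + 0 * 0)).
  - apply dl_plus. apply dl_const. apply dl_mult. apply derivable_pt_lim_id. apply dl_const.
  - ring.
Qed.

Definition qderiv (g : R -> quat) (D : quat) : Prop :=
  derivable_pt_lim (fun t => qx (g t)) 0 (qx D) /\
  derivable_pt_lim (fun t => qy (g t)) 0 (qy D) /\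
  derivable_pt_lim (fun t => qz (g t)) 0 (qz D) /\
  derivable_pt_lim (fun t => qw (g t)) 0 (qw D).

Lemma qd_const q : qderiv (fun _ => q) qzero.
Proof. repeat split; apply dl_const. Qed.

Lemma qd_add g h Dg Dh : qderiv g Dg -> qderiv h Dh ->
  qderiv (fun t => qadd (g t) (h t)) (qadd Dg Dh).
Proof.
  intros (?&?&?&?) (?&?&?&?); repeat split; simpl; apply dl_plus; auto.
Qed.

Lemma qd_mul g h Dg Dh : qderiv g Dg -> qderiv h Dh ->
  qderiv (fun t => qmul (g t) (h t)) (qadd (qmul Dg (h 0)) (qmul (g 0) Dh)).
Proof.
  intros (?&?&?&?) (?&?&?&?); repeat split; simpl;
  (eapply dl_eq; [ repeat first [apply dl_minus | apply dl_plus | apply dl_mult]; eassumption | cbv beta; ring ]).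
Qed.

Lemma qd_ext g D D' : qderiv g D -> D = D' -> qderiv g D'.
Proof. intros H ->; exact H. Qed.

Definition gam (c e : quat) (t : R) := qadd c (qscale t e).

Lemma gam0 c e : gam c e 0 = c.
Proof. destruct c; unfold gam, qadd, qscale; simpl; f_equal; ring. Qed.

Lemma qd_gam c e : qderiv (gam c e) e.
Proof. repeat split; simpl; apply dl_lin. Qed.

Fixpoint Pd (c e : quat) (k : nat) : quat :=
  match k with O => qzero | S m => qadd (qmul e (qpow c m)) (qmul c (Pd c e m)) end.

Lemma qd_pow c e k : qderiv (fun t => qpow (gam c e t) k) (Pd c e k).
Proof.
  induction k; simpl.
  - apply qd_ext with qzero. apply qd_const. reflexivity.
  - eapply qd_ext. apply qd_mul. apply qd_gam. apply IHk. cbv beta; rewrite !gam0. reflexivity.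
Qed.

Fixpoint Sd (c e : quat) (f : lpoly) (k : nat) : quat :=
  match f with nil => qzero | a :: f' => qadd (qmul a (Pd c e k)) (Sd c e f' (S k)) end.

Lemma qd_eval c e f k : qderiv (fun t => qeval_from f k (gam c e t)) (Sd c e f k).
Proof.
  revert k; induction f; intros k; simpl.
  - apply qd_const.
  - eapply qd_ext. apply qd_add. apply qd_mul. apply qd_const. apply qd_pow. apply IHf.
    destruct a; simpl. unfold qadd, qmul, qzero; simpl; f_equal; ring.
Qed.

Definition cplx (q : quat) := qz q = 0 /\ qw q = 0.
Definition qconjC (q : quat) := Quat (qx q) (- qy q) (qz q) (qw q).

Lemma cplx_pow c k : cplx c -> cplx (qpow c k).
Proof.
  intros [Hz Hw]. induction k; simpl. split; reflexivity.
  destruct IHk as [H1 H2]; revert H1 H2; generalize (qpow c k); intros p H1 H2.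
  destruct c, p; simpl in *; subst; split; unfold qmul; simpl; ring.
Qed.

Fixpoint Uc (c : quat) (k : nat) : quat :=
  match k with O => qzero | S m => qadd (qpow c m) (qmul c (Uc c m)) end.
Fixpoint Wc (c : quat) (k : nat) : quat :=
  match k with O => qzero | S m => qadd (qconjC (qpow c m)) (qmul c (Wc c m)) end.

Lemma Pd_U c e k : cplx c -> cplx e -> Pd c e k = qmul (Uc c k) e.
Proof.
  intros Hc He. induction k; simpl.
  - destruct e; unfold qmul, qzero; simpl; f_equal; ring.
  - rewrite IHk. destruct (cplx_pow c k Hc) as [H1 H2]. revert H1 H2.
    generalize (qpow c k). intros p H1 H2.
    destruct Hc as [Hc1 Hc2], He as [He1 He2].
    destruct c, e, p, (Uc _ k); simpl in *; subst.
    unfold qadd, qmul, qzero; simpl; f_equal; ring.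
Qed.

Definition jk (e : quat) := qx e = 0 /\ qy e = 0.

Lemma Pd_W c e k : cplx c -> jk e -> Pd c e k = qmul (Wc c k) e.
Proof.
  intros Hc He. induction k; simpl.
  - destruct e; unfold qmul, qzero; simpl; f_equal; ring.
  - rewrite IHk. destruct (cplx_pow c k Hc) as [H1 H2]. revert H1 H2.
    generalize (qpow c k). intros p H1 H2.
    destruct Hc as [Hc1 Hc2], He as [He1 He2].
    destruct c, e, p, (Wc _ k); simpl in *; subst.
    unfold qadd, qmul, qzero, qconjC; simpl; f_equal; ring.
Qed.

Fixpoint Acoef (V : nat -> quat) (f : lpoly) (k : nat) : quat :=
  match f with nil => qzero | a :: f' => qadd (qmul a (V k)) (Acoef V f' (S k)) end.

Lemma Sd_A c e f k V : (forall m, Pd c e m = qmul (V m) e) ->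
  Sd c e f k = qmul (Acoef V f k) e.
Proof.
  intros HV. revert k; induction f; intros k; simpl.
  - destruct e; unfold qmul, qzero; simpl; f_equal; ring.
  - rewrite IHf, HV. destruct a, e, (V k), (Acoef V f (S k)); unfold qadd, qmul, qzero; simpl; f_equal; ring.
Qed.

Theorem proposition4p1 (f : lpoly) (r s : R) (hs : s <> 0) :
  exists a1 a2 a3 a4 b1 b2 b3 b4 : R,
    forall i j : nat, (1 <= i <= 4)%nat -> (1 <= j <= 4)%nat ->
      jacobian_entry_is f (Quat r s 0 0) i j (pattern_matrix a1 a2 a3 a4 b1 b2 b3 b4 i j).
Proof.
  set (c := Quat r s 0 0).
  assert (Hc : cplx c) by (split; reflexivity).
  set (A := Acoef (Uc c) f 0). set (B := Acoef (Wc c) f 0).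
  exists (qx A), (qz B), (qz A), (qx B), (qy A), (- qw B), (- qw A), (qy B).
  intros i j Hi Hj.
  assert (HD : forall e V, (forall m, Pd c e m = qmul (V m) e) -> qbasis j = e ->
    forall i, jacobian_entry_is f c i j (qcomp i (qmul (Acoef V f 0) (qbasis j)))).
  { intros e V HV E i0. destruct (qd_eval c e f 0) as (H1&H2&H3&H4).
    rewrite (Sd_A c e f 0 V HV) in H1, H2, H3, H4.
    unfold jacobian_entry_is, qeval. rewrite E. fold (gam c e).
    destruct i0 as [|[|[|[|]]]]; simpl; assumption. }
  assert (Hj' : j = 1%nat \/ j = 2%nat \/ j = 3%nat \/ j = 4%nat) by lia.
  assert (Hi' : i = 1%nat \/ i = 2%nat \/ i = 3%nat \/ i = 4%nat) by lia.
  destruct Hj' as [Ej|[Ej|[Ej|Ej]]]; subst j;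
  [ pose proof (HD (Quat 1 0 0 0) (Uc c)) as HH;
    specialize (HH (fun m => Pd_U c (Quat 1 0 0 0) m Hc ltac:(split; reflexivity)) eq_refl i)
  | pose proof (HD (Quat 0 1 0 0) (Uc c)) as HH;
    specialize (HH (fun m => Pd_U c (Quat 0 1 0 0) m Hc ltac:(split; reflexivity)) eq_refl i)
  | pose proof (HD (Quat 0 0 1 0) (Wc c)) as HH;
    specialize (HH (fun m => Pd_W c (Quat 0 0 1 0) m Hc ltac:(split; reflexivity)) eq_refl i)
  | pose proof (HD (Quat 0 0 0 1) (Wc c)) as HH;
    specialize (HH (fun m => Pd_W c (Quat 0 0 0 1) m Hc ltac:(split; reflexivity)) eq_refl i) ];
  (destruct Hi' as [Ei|[Ei|[Ei|Ei]]]; subst i; unfold jacobian_entry_is in *;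
   (eapply dl_eq; [exact HH | fold A B; simpl; ring])).
Qed.
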